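(* For every $q>1$, \[ \phi(q)=\frac{1-1/q}{\ln 2}+\sum_{k=1}^\infty\frac1k\log_2\!\left(\frac{k+\frac{1}{q-1}+1}{k+\frac{1}{q-1}}\right),\qquad \rho(q)=\zeta\!\left(2,\tfrac{q}{q-1}\right)=\sum_{k=0}^\infty\frac{1}{\left(k+\frac{q}{q-1}\right)^2}, \] where $\zeta(s,t)=\sum_{k\ge0}(k+t)^{-s}$ is the Hurwitz zeta function.
   Context: For $q>1$ define $\phi(q)=\int_{-\infty}^\infty -\big(e^{-e^r}-e^{-qe^r}\big)\log_2\big(e^{-e^r}-e^{-qe^r}\big)\,dr$ and $\rho(q)=\int_{-\infty}^\infty \frac{\left(-e^re^{-e^r}+qe^re^{-qe^r}\right)^2}{e^{-e^r}-e^{-qe^r}}\,dr$. *)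

(* Defs.v *)
From Stdlib Require Import Reals.
From Coquelicot Require Import Coquelicot.
Open Scope R_scope.

Definition log2 (x : R) : R := ln x / ln 2.

Definition gq (q r : R) : R := exp (- exp r) - exp (- (q * exp r)).

Definition phi_integrand (q r : R) : R := - (gq q r) * log2 (gq q r).

Definition rho_integrand (q r : R) : R :=
  (- (exp r * exp (- exp r)) + q * exp r * exp (- (q * exp r))) ^ 2 / gq q r.

Definition hurwitz_zeta (s t : R) : R := Series (fun k : nat => / Rpower (INR k + t) s).

(* Main.v *)
Require Import Defs.
From Stdlib Require Import Reals Lra Psatz.
From Coquelicot Require Import Coquelicot.
Open Scope R_scope.

Notation MI := (Rbar_locally m_infty).
Notation PI_ := (Rbar_locally p_infty).

Lemma ball_R (l e y : R) : ball l e y <-> Rabs (y - l) < e.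
Proof. unfold ball; simpl; unfold AbsRing_ball, abs, minus, plus, opp; simpl. tauto. Qed.

Lemma gen_intro (f : R -> R) (L : R) :
  (forall x, continuous f x) ->
  (forall eps, 0 < eps -> exists M, forall a b, a < -M -> M < b -> Rabs (RInt f a b - L) < eps) ->
  is_RInt_gen f MI PI_ L.
Proof.
  intros Hc H P [eps HP].
  destruct (H eps (cond_pos eps)) as [M HM].
  apply (Filter_prod _ _ _ (fun a => a < -M) (fun b => M < b)).
  - exists (-M); auto.
  - exists M; auto.
  - intros a b Ha Hb. exists (RInt f a b); split.
    + exact (RInt_correct f a b (ex_RInt_continuous f a b (fun z _ => Hc z))).
    + apply HP, ball_R. simpl. apply HM; auto.
Qed.

Lemma gen_elim (g : R -> R) (L : R) : is_RInt_gen g MI PI_ L ->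
  forall eps, 0 < eps -> exists M, forall a b, a < -M -> M < b ->
    exists y, is_RInt g a b y /\ Rabs (y - L) < eps.
Proof.
  intros H eps He.
  destruct (H (fun y => Rabs (y - L) < eps)) as [Q R' [M1 HQ] [M2 HR] HQR].
  - exists (mkposreal eps He); intros y Hy; apply ball_R in Hy; exact Hy.
  - exists (Rabs M1 + Rabs M2). intros a b Ha Hb.
    apply (HQR a b).
    + apply HQ. pose proof (Rle_abs M1); pose proof (Rabs_pos M2);
      pose proof (Rabs_pos M1); pose proof (Rle_abs (-M1)); rewrite Rabs_Ropp in *; lra.
    + apply HR. pose proof (Rle_abs M2); pose proof (Rabs_pos M1); lra.
Qed.

Lemma gen_approx (f : R -> R) (L : R) :
  (forall x, continuous f x) ->
  (forall eps, 0 < eps -> exists g Lg, is_RInt_gen g MI PI_ Lg /\ Rabs (Lg - L) <= eps /\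
      forall a b, a <= b -> Rabs (RInt f a b - RInt g a b) <= eps) ->
  is_RInt_gen f MI PI_ L.
Proof.
  intros Hc H. apply gen_intro; auto. intros eps He.
  destruct (H (eps/4)) as [g [Lg [Hg [HL Hab]]]]; [lra|].
  destruct (gen_elim g Lg Hg (eps/4)) as [M HM]; [lra|].
  exists (Rabs M). intros a b Ha Hb.
  pose proof (Rle_abs M); pose proof (Rle_abs (-M)); rewrite Rabs_Ropp in *.
  destruct (HM a b) as [y [Hy Hy']]; [lra|lra|].
  apply (is_RInt_unique (V:=R_CompleteNormedModule)) in Hy.
  specialize (Hab a b). assert (a <= b) by lra. specialize (Hab H2).
  rewrite Hy in Hab.
  replace (RInt f a b - L) with ((RInt f a b - y) + (y - Lg) + (Lg - L)) by ring.
  eapply Rle_lt_trans; [apply Rabs_triang|].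
  eapply Rle_lt_trans; [apply Rplus_le_compat_r, Rabs_triang|]. lra.
Qed.

Lemma exp_le' x y : x <= y -> exp x <= exp y.
Proof. intros [H|H]; [apply Rlt_le, exp_increasing; auto | subst; lra]. Qed.

Lemma exp_small (K eps : R) : 0 < eps -> exists M, 0 <= M /\ forall r, M <= r -> Rabs K * exp (-r) < eps.
Proof.
  intros He. set (t := eps / (2 * (Rabs K + 1))).
  assert (HK := Rabs_pos K).
  assert (Ht : 0 < t) by (unfold t; apply Rdiv_lt_0_compat; lra).
  exists (Rabs (ln t)). split; [apply Rabs_pos|]. intros r Hr.
  assert (exp (-r) <= t).
  { rewrite <- (exp_ln t Ht). apply exp_le'. pose proof (Rle_abs (- ln t)); rewrite Rabs_Ropp in *; lra. }
  apply Rle_lt_trans with (Rabs K * t). apply Rmult_le_compat_l; lra.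
  assert (Et : (Rabs K + 1) * t = eps / 2) by (unfold t; field; lra).
  apply Rlt_le_trans with ((Rabs K + 1) * t). apply Rmult_lt_compat_r; lra. lra.
Qed.

Lemma gen_prim (F f : R -> R) (la lb K : R) :
  (forall r, is_derive F r (f r)) -> (forall r, continuous f r) ->
  (forall r, Rabs (F r - la) <= K * exp r) ->
  (forall r, Rabs (F r - lb) <= K * exp (- r)) ->
  is_RInt_gen f MI PI_ (lb - la).
Proof.
  intros Hd Hc Hl Hr. apply gen_intro; auto. intros eps He.
  destruct (exp_small K (eps/2)) as [M [HM0 HM]]; [lra|].
  exists M. intros a b Ha Hb.
  assert (HI : is_RInt f a b (minus (F b) (F a))) by (apply (is_RInt_derive (V:=R_CompleteNormedModule)); auto).
  apply (is_RInt_unique (V:=R_CompleteNormedModule)) in HI. rewrite HI.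
  unfold minus, plus, opp; simpl.
  specialize (Hl a); specialize (Hr b).
  assert (K * exp a <= Rabs K * exp (- M)).
  { apply Rmult_le_compat; [|pose proof (exp_pos a); lra| apply Rle_abs | apply exp_le'; lra].
    pose proof (Rabs_pos (F a - la)); pose proof (exp_pos a).
    destruct (Rle_or_lt 0 K); auto. assert (K * exp a < 0) by (apply Rmult_neg_pos; auto). lra. }
  assert (K * exp (- b) <= Rabs K * exp (- M)).
  { apply Rmult_le_compat; [|pose proof (exp_pos (-b)); lra| apply Rle_abs | apply exp_le'; lra].
    pose proof (Rabs_pos (F b - lb)); pose proof (exp_pos (-b)).
    destruct (Rle_or_lt 0 K); auto. assert (K * exp (-b) < 0) by (apply Rmult_neg_pos; auto). lra. }
  specialize (HM M (Rle_refl _)).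
  replace (F b + - F a - (lb - la)) with ((F b - lb) - (F a - la)) by ring.
  eapply Rle_lt_trans; [apply Rabs_triang|]. rewrite Rabs_Ropp. lra.
Qed.

Lemma exRc (f : R -> R) a b : (forall x, continuous f x) -> ex_RInt f a b.
Proof. intros H; apply (ex_RInt_continuous (V:=R_CompleteNormedModule)); auto. Qed.

Lemma cder (f : R -> R) x : ex_derive f x -> continuous f x.
Proof. apply (ex_derive_continuous (K:=R_AbsRing) (V:=R_NormedModule)). Qed.

Definition hh (r : R) := exp (- exp r).

Lemma hh_cont r : continuous hh r.
Proof. apply cder; unfold hh; auto_derive; auto. Qed.

Lemma hh_ex a b : ex_RInt hh a b.
Proof. apply exRc, hh_cont. Qed.

Lemma RInt_shift (A a b : R) : RInt (fun r => hh (r + A)) a b = RInt hh (a + A) (b + A).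
Proof.
  rewrite <- (Rmult_1_l a) at 2. rewrite <- (Rmult_1_l b) at 2.
  rewrite <- (RInt_comp_lin (V:=R_CompleteNormedModule)) by apply hh_ex.
  apply RInt_ext. intros x _. rewrite Rmult_1_l. now rewrite (scal_one (V:=R_NormedModule)).
Qed.

Lemma frul (al be : R) : 0 < al -> al < be ->
  is_RInt_gen (fun r => exp (- (al * exp r)) - exp (- (be * exp r))) MI PI_ (ln be - ln al).
Proof.
  intros Ha Hab. set (A := ln al). set (B := ln be).
  assert (HAB : A < B) by (apply ln_increasing; lra).
  assert (Eh : forall r, hh (r + A) - hh (r + B) = exp (- (al * exp r)) - exp (- (be * exp r))).
  { intros r; unfold hh, A, B. rewrite !exp_plus, !exp_ln by lra. f_equal; f_equal; f_equal; ring. }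
  apply gen_intro.
  { intros x; apply cder; auto_derive; auto. }
  intros eps He.
  destruct (exp_small ((B - A) * (exp B + exp (- A))) eps He) as [M [HM0 HM]].
  exists M. intros a b Ha' Hb'.
  rewrite (RInt_ext (V:=R_CompleteNormedModule) _ (fun r => hh (r + A) - hh (r + B))) by (intros; symmetry; apply Eh).
  assert (Hex : forall f : R -> R, (forall x, continuous f x) -> forall u v, ex_RInt f u v).
  { intros f Hf u v; apply exRc; auto. }
  assert (Hs : forall C, forall x, continuous (fun r => hh (r + C)) x).
  { intros C x; apply cder; unfold hh; auto_derive; auto. }
  rewrite (RInt_minus (V:=R_CompleteNormedModule)) by (apply Hex; auto).
  unfold minus, plus, opp; simpl. rewrite !RInt_shift.
  rewrite <- (RInt_Chasles (V:=R_CompleteNormedModule) hh (a + A) (a + B) (b + A)) by apply hh_ex.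
  rewrite <- (RInt_Chasles (V:=R_CompleteNormedModule) hh (a + B) (b + A) (b + B)) by apply hh_ex.
  unfold plus; simpl.
  set (I1 := RInt hh (a + A) (a + B)). set (I2 := RInt hh (b + A) (b + B)).
  assert (E1 : RInt (fun t => hh t - 1) (a + A) (a + B) = I1 - (B - A)).
  { rewrite (RInt_minus (V:=R_CompleteNormedModule)) by (apply Hex; intros; first [apply hh_cont | apply cder; auto_derive; auto]).
    rewrite (RInt_const (V:=R_CompleteNormedModule)). unfold I1, minus, plus, opp, scal; simpl.
    unfold mult; simpl. ring. }
  assert (H1 : Rabs (I1 - (B - A)) <= (B - A) * exp (a + B)).
  { rewrite <- E1. replace (B - A) with ((a + B) - (a + A)) at 1 by ring.
    apply abs_RInt_le_const; [lra| apply Hex; intros; apply cder; unfold hh; auto_derive; auto |].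
    intros t Ht. unfold hh. pose proof (exp_ineq1_le (- exp t)). 
    assert (exp (- exp t) <= 1) by (rewrite <- exp_0; apply exp_le'; pose proof (exp_pos t); lra).
    assert (exp t <= exp (a + B)) by (apply exp_le'; lra).
    rewrite Rabs_left1; lra. }
  assert (H2 : Rabs I2 <= (B - A) * exp (- (b + A))).
  { unfold I2. replace (B - A) with ((b + B) - (b + A)) at 1 by ring.
    apply abs_RInt_le_const; [lra| apply hh_ex |].
    intros t Ht. unfold hh. rewrite Rabs_pos_eq by (apply Rlt_le, exp_pos).
    rewrite exp_Ropp, (exp_Ropp (b + A)). pose proof (exp_ineq1_le (exp t)).
    assert (exp (b + A) <= exp t) by (apply exp_le'; lra).
    pose proof (exp_pos (b+A)). apply Rinv_le_contravar; lra. }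
  specialize (HM M (Rle_refl _)).
  assert (exp (a + B) = exp B * exp a) by (rewrite exp_plus; ring).
  assert (exp (- (b + A)) = exp (- A) * exp (- b)) by (rewrite <- exp_plus; f_equal; ring).
  assert (exp a <= exp (- M)) by (apply exp_le'; lra).
  assert (exp (- b) <= exp (- M)) by (apply exp_le'; lra).
  rewrite Rabs_pos_eq in HM by (apply Rmult_le_pos; [lra| pose proof (exp_pos B); pose proof (exp_pos (-A)); lra]).
  replace (I1 + RInt hh (a + B) (b + A) + - (RInt hh (a + B) (b + A) + I2) - (B - A)) with ((I1 - (B - A)) - I2) by ring.
  eapply Rle_lt_trans; [apply Rabs_triang|]. rewrite Rabs_Ropp.
  apply Rle_lt_trans with ((B - A) * (exp B + exp (- A)) * exp (- M)); [|exact HM].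
  assert (HBA : 0 <= B - A) by lra.
  assert (Q1 : (B - A) * exp (a + B) <= (B - A) * (exp B * exp (- M))).
  { rewrite H. apply Rmult_le_compat_l; auto. apply Rmult_le_compat_l; auto. apply Rlt_le, exp_pos. }
  assert (Q2 : (B - A) * exp (- (b + A)) <= (B - A) * (exp (- A) * exp (- M))).
  { rewrite H0. apply Rmult_le_compat_l; auto. apply Rmult_le_compat_l; auto. apply Rlt_le, exp_pos. }
  replace ((B - A) * (exp B + exp (- A)) * exp (- M)) with ((B - A) * (exp B * exp (- M)) + (B - A) * (exp (- A) * exp (- M))) by ring.
  lra.
Qed.

Lemma sumS (a : nat -> R) n : sum_n a (S n) = sum_n a n + a (S n).
Proof. apply (sum_Sn (G:=R_AbelianMonoid)). Qed.
Lemma sum0 (a : nat -> R) : sum_n a 0 = a 0%nat.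
Proof. apply (sum_O (G:=R_AbelianMonoid)). Qed.
Lemma sumext (a b : nat -> R) N : (forall n, a n = b n) -> sum_n a N = sum_n b N.
Proof. apply (sum_n_ext (G:=R_AbelianMonoid)). Qed.

Lemma gen_ext (f g : R -> R) (L L' : R) : (forall x, f x = g x) -> L = L' ->
  is_RInt_gen f MI PI_ L -> is_RInt_gen g MI PI_ L'.
Proof.
  intros H HL. subst L'. replace g with f; auto.
  apply FunctionalExtensionality.functional_extensionality; auto.
Qed.

Lemma gen_plus (f g : R -> R) Lf Lg : is_RInt_gen f MI PI_ Lf -> is_RInt_gen g MI PI_ Lg ->
  is_RInt_gen (fun r => f r + g r) MI PI_ (Lf + Lg).
Proof.
  intros H1 H2. exact (is_RInt_gen_plus (V:=R_NormedModule) f g Lf Lg H1 H2).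
Qed.

Lemma gen_scal (f : R -> R) k L : is_RInt_gen f MI PI_ L ->
  is_RInt_gen (fun r => k * f r) MI PI_ (k * L).
Proof.
  intros H. exact (is_RInt_gen_scal (V:=R_NormedModule) f k L H).
Qed.

Lemma gen_sum (F : nat -> R -> R) (L : nat -> R) N :
  (forall k, is_RInt_gen (F k) MI PI_ (L k)) ->
  is_RInt_gen (fun r => sum_n (fun k => F k r) N) MI PI_ (sum_n L N).
Proof.
  intros H. induction N.
  - apply (gen_ext (F 0%nat) _ (L 0%nat)); auto. intros; now rewrite sum0. now rewrite sum0.
  - eapply gen_ext; [| | apply gen_plus; [apply IHN | apply (H (S N))]].
    intros; now rewrite sumS. now rewrite sumS.
Qed.

Lemma cont_sum (F : nat -> R -> R) N x : (forall k, continuous (F k) x) ->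
  continuous (fun r => sum_n (fun k => F k r) N) x.
Proof.
  intros H. induction N.
  - eapply continuous_ext; [|apply (H 0%nat)]. intros; simpl; now rewrite sum0.
  - eapply continuous_ext; [intros; symmetry; apply sumS|].
    apply (continuous_plus (V:=R_NormedModule)); auto.
Qed.

Lemma exp_sq_bound y : 0 <= y -> (1 + y / 2) ^ 2 <= exp y.
Proof.
  intros Hy. replace y with (y/2 + y/2) at 2 by field. rewrite exp_plus.
  pose proof (exp_ineq1_le (y/2)). simpl. rewrite Rmult_1_r. apply Rmult_le_compat; lra.
Qed.

Lemma exp_inv_bound y : 0 < y -> exp (- y) <= / y.
Proof.
  intros Hy. rewrite exp_Ropp. pose proof (exp_ineq1_le y). apply Rinv_le_contravar; lra.
Qed.

Lemma term_sq (a : R) : 0 < a ->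
  is_RInt_gen (fun r => exp r ^ 2 * exp (- (a * exp r))) MI PI_ (/ a ^ 2).
Proof.
  intros Ha.
  apply (gen_ext (fun r => exp r ^ 2 * exp (- (a * exp r))) _ (0 - - / a ^ 2)). intros; reflexivity. field; lra.
  apply (gen_prim (fun r => - (exp r / a + / a ^ 2) * exp (- (a * exp r))) _ _ _ (2 / a + 4 / a ^ 3)).
  - intros r. auto_derive; auto. field. lra.
  - intros r. apply cder. auto_derive; auto.
  - intros r. set (x := exp r). assert (Hx : 0 < x) by apply exp_pos.
    set (E := exp (- (a * x))).
    assert (HE1 : E <= 1) by (unfold E; rewrite <- exp_0; apply exp_le'; nra).
    assert (HE0 : 0 < E) by apply exp_pos.
    assert (HE2 : 1 - a * x <= E) by (unfold E; pose proof (exp_ineq1_le (- (a * x))); lra).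
    replace (- (x / a + / a ^ 2) * E - - / a ^ 2) with ((1 - E) / a ^ 2 - x / a * E) by (field; lra).
    assert (0 <= (1 - E) / a ^ 2 <= x / a).
    { split. apply Rmult_le_pos; [lra| apply Rlt_le, Rinv_0_lt_compat; nra].
      apply Rmult_le_reg_r with (a ^ 2); [nra|]. unfold Rdiv. rewrite Rmult_assoc, Rinv_l by nra.
      replace (x * / a * a ^ 2) with (a * x) by (field; lra). lra. }
    assert (0 <= x / a * E <= x / a).
    { assert (0 < x / a) by (apply Rdiv_lt_0_compat; lra). split; nra. }
    assert (x / a = / a * x) by (field; lra).
    assert (0 < 4 / a ^ 3 * x) by (apply Rmult_lt_0_compat; [apply Rdiv_lt_0_compat; [lra|apply pow_lt; lra]|lra]).
    apply Rabs_le; split; nra.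
  - intros r. set (x := exp r). assert (Hx : 0 < x) by apply exp_pos.
    assert (Hr : exp (- r) = / x) by (unfold x; apply exp_Ropp). rewrite Hr.
    set (E := exp (- (a * x))).
    replace (- (x / a + / a ^ 2) * E - 0) with (- ((x / a + / a ^ 2) * E)) by ring.
    assert (HE0 : 0 < E) by apply exp_pos.
    assert (HE : E * (1 + a * x / 2) ^ 2 <= 1).
    { unfold E. rewrite exp_Ropp. pose proof (exp_sq_bound (a * x)). 
      pose proof (exp_pos (a * x)). 
      apply Rmult_le_reg_l with (exp (a * x)); auto. rewrite <- Rmult_assoc, Rinv_r by lra. nra. }
    assert (HP : 0 <= x / a + / a ^ 2).
    { apply Rplus_le_le_0_compat; [apply Rlt_le, Rdiv_lt_0_compat; lra| apply Rlt_le, Rinv_0_lt_compat, pow_lt; lra]. }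
    rewrite Rabs_Ropp, Rabs_mult, (Rabs_pos_eq _ HP), (Rabs_pos_eq E) by lra.
    apply Rmult_le_reg_l with x; auto.
    assert (Ha2 : 0 < a ^ 2) by (apply pow_lt; lra). assert (Ha3 : 0 < a ^ 3) by (apply pow_lt; lra).
    replace (x * ((2 / a + 4 / a ^ 3) * / x)) with (2 / a + 4 / a ^ 3) by (field; lra).
    replace (x * ((x / a + / a ^ 2) * E)) with ((x * x / a + x / a ^ 2) * E) by (field; lra).
    assert (D : 4 / a ^ 3 * (1 + a * x / 2) ^ 2 - (x * x / a + x / a ^ 2) = 4 / a ^ 3 + 3 * x / a ^ 2) by (field; lra).
    assert (0 <= 4 / a ^ 3 + 3 * x / a ^ 2).
    { apply Rplus_le_le_0_compat; apply Rlt_le, Rdiv_lt_0_compat; lra. }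
    assert (0 < 4 / a ^ 3) by (apply Rdiv_lt_0_compat; lra).
    assert (0 < 2 / a) by (apply Rdiv_lt_0_compat; lra).
    apply Rle_trans with (4 / a ^ 3 * (E * (1 + a * x / 2) ^ 2)).
    - replace (4 / a ^ 3 * (E * (1 + a * x / 2) ^ 2)) with (E * (4 / a ^ 3 * (1 + a * x / 2) ^ 2)) by ring.
      apply Rmult_le_compat_r with (r := E) in H; [|lra]. nra.
    - nra.
Qed.

Lemma term_lin (q : R) : 1 < q ->
  is_RInt_gen (fun r => exp r * (exp (- exp r) - exp (- (q * exp r)))) MI PI_ (1 - / q).
Proof.
  intros Hq.
  apply (gen_ext (fun r => exp r * (exp (- exp r) - exp (- (q * exp r)))) _ (0 - (-1 + / q))).
  intros; reflexivity. ring.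
  apply (gen_prim (fun r => - exp (- exp r) + exp (- (q * exp r)) / q) _ _ _ (2 + / q ^ 2)).
  - intros r. auto_derive; auto. field. lra.
  - intros r. apply cder. auto_derive; auto.
  - intros r. set (x := exp r). assert (Hx : 0 < x) by apply exp_pos.
    set (E := exp (- x)). set (G := exp (- (q * x))).
    assert (0 < E <= 1) by (split; [apply exp_pos| unfold E; rewrite <- exp_0; apply exp_le'; lra]).
    assert (0 < G <= 1) by (split; [apply exp_pos| unfold G; rewrite <- exp_0; apply exp_le'; nra]).
    assert (1 - x <= E) by (unfold E; apply exp_ineq1_le).
    assert (1 - q * x <= G) by (unfold G; apply exp_ineq1_le).
    assert (0 <= (1 - G) / q <= x).
    { split. apply Rmult_le_pos; [lra| apply Rlt_le, Rinv_0_lt_compat; lra].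
      apply Rmult_le_reg_r with q; [lra|]. unfold Rdiv. rewrite Rmult_assoc, Rinv_l by lra. lra. }
    replace (- E + G / q - (-1 + / q)) with ((1 - E) - (1 - G) / q) by (field; lra).
    assert (0 < / q ^ 2) by (apply Rinv_0_lt_compat, pow_lt; lra).
    apply Rabs_le; split; nra.
  - intros r. set (x := exp r). assert (Hx : 0 < x) by apply exp_pos.
    assert (Hr : exp (- r) = / x) by (unfold x; apply exp_Ropp). rewrite Hr.
    pose proof (exp_inv_bound x Hx). pose proof (exp_inv_bound (q * x)).
    assert (0 < exp (- x)) by apply exp_pos. assert (0 < exp (- (q * x))) by apply exp_pos.
    assert (exp (- (q * x)) <= / q * / x).
    { rewrite <- Rinv_mult. apply H0; nra. }
    assert (0 < / x) by (apply Rinv_0_lt_compat; lra).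
    assert (0 < / q) by (apply Rinv_0_lt_compat; lra).
    assert (/ q < 1) by (rewrite <- Rinv_1; apply Rinv_lt_contravar; lra).
    assert (exp (- (q * x)) / q <= / x).
    { unfold Rdiv. apply Rle_trans with (/ q * / x * / q). apply Rmult_le_compat_r; lra.
      replace (/ q * / x * / q) with (/ x * (/ q * / q)) by ring.
      assert (/ q * / q <= 1) by nra. nra. }
    assert (0 < / q ^ 2) by (apply Rinv_0_lt_compat, pow_lt; lra).
    assert (0 <= exp (- (q * x)) / q) by (apply Rlt_le, Rdiv_lt_0_compat; lra).
    rewrite Rminus_0_r. apply Rabs_le; split; nra.
Qed.

Lemma is_series_lim (a : nat -> R) l : is_series a l <-> is_lim_seq (sum_n a) l.
Proof. split; intros H; exact H. Qed.

Lemma tel_sum C N : @eq R (sum_n (fun k => C * (/ (INR k + 1) - / (INR k + 2))) N) (C * (1 - / (INR N + 2))).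
Proof.
  induction N.
  - rewrite sum0. simpl. field.
  - rewrite sumS, IHN, S_INR. pose proof (pos_INR N). field. lra.
Qed.

Lemma tel_series C : is_series (fun k => C * (/ (INR k + 1) - / (INR k + 2))) C.
Proof.
  apply is_series_lim, is_lim_seq_spec. intros eps.
  destruct (INR_unbounded ((Rabs C + 1) / eps)) as [N0 HN0].
  exists N0. intros n Hn. rewrite tel_sum.
  assert (HI : INR N0 <= INR n) by (apply le_INR; lia).
  pose proof (pos_INR n). pose proof (cond_pos eps).
  replace (C * (1 - / (INR n + 2)) - C) with (- (C / (INR n + 2))) by (field; lra).
  rewrite Rabs_Ropp. unfold Rdiv. rewrite Rabs_mult, Rabs_inv, (Rabs_pos_eq (INR n + 2)) by lra.
  apply Rmult_lt_reg_r with (INR n + 2); [lra|]. rewrite Rmult_assoc, Rinv_l, Rmult_1_r by lra.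
  assert ((Rabs C + 1) / eps * eps = Rabs C + 1) by (field; lra).
  assert ((Rabs C + 1) / eps < INR n + 2) by lra.
  apply Rmult_lt_compat_r with (r := eps) in H2; auto. nra.
Qed.

Lemma ex_le_tel (a : nat -> R) C : (forall k, Rabs (a k) <= C * (/ (INR k + 1) - / (INR k + 2))) -> ex_series a.
Proof.
  intros H. apply (ex_series_le (K:=R_AbsRing) (V:=R_CompleteNormedModule) a _ H).
  eexists; apply tel_series.
Qed.

Lemma ex_inv_sq (t : R) : 1 <= t -> ex_series (fun k => / (INR k + t) ^ 2).
Proof.
  intros Ht. apply (ex_le_tel _ 2). intros k. pose proof (pos_INR k).
  rewrite Rabs_pos_eq by (apply Rlt_le, Rinv_0_lt_compat; nra).
  replace (2 * (/ (INR k + 1) - / (INR k + 2))) with (/ ((INR k + 1) * (INR k + 2) / 2)) by (field; lra).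
  apply Rinv_le_contravar. apply Rdiv_lt_0_compat; nra. nra.
Qed.

Lemma exp_pow y m : exp y ^ m = exp (INR m * y).
Proof.
  induction m. simpl. now rewrite Rmult_0_l, exp_0.
  rewrite S_INR. simpl. rewrite IHm, <- exp_plus. f_equal. ring.
Qed.

Lemma geo C u N : u <> 1 -> @eq R (sum_n (fun k => C * u ^ S k) N) (C * u * (1 - u ^ S N) / (1 - u)).
Proof.
  intros Hu. assert (1 - u <> 0) by (intro; apply Hu; lra).
  induction N.
  - rewrite sum0. simpl. field. auto.
  - rewrite sumS, IHN. simpl. field. auto.
Qed.

Lemma RInt_le_prim (f h H : R -> R) a b : a <= b -> (forall x, continuous f x) ->
  (forall x, continuous h x) -> (forall x, is_derive H x (h x)) ->
  (forall x, a <= x <= b -> f x <= h x) -> RInt f a b <= H b - H a.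
Proof.
  intros Hab Hf Hh HH Hle.
  assert (HI : is_RInt h a b (minus (H b) (H a))) by (apply (is_RInt_derive (V:=R_CompleteNormedModule)); auto).
  apply (is_RInt_unique (V:=R_CompleteNormedModule)) in HI.
  unfold minus, plus, opp in HI; simpl in HI. assert (HI2 : RInt h a b = H b - H a) by (rewrite HI; reflexivity). rewrite <- HI2.
  apply RInt_le; auto; try (apply exRc; auto). intros; apply Hle; lra.
Qed.

Lemma RInt_sub (f g : R -> R) a b : (forall x, continuous f x) -> (forall x, continuous g x) ->
  RInt f a b - RInt g a b = RInt (fun x => f x - g x) a b.
Proof.
  intros Hf Hg. rewrite (RInt_minus (V:=R_CompleteNormedModule)) by (apply exRc; auto). reflexivity.
Qed.

Lemma gq_pos q r : 1 < q -> exp (- (q * exp r)) < exp (- exp r).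
Proof. intros Hq. apply exp_increasing. pose proof (exp_pos r). nra. Qed.

Definition rho_g (q : R) (N : nat) (r : R) : R :=
  exp r ^ 2 * exp (- (1 * exp r)) + (- q ^ 2) * (exp r ^ 2 * exp (- (q * exp r)))
  + sum_n (fun k => (q - 1) ^ 2 * (exp r ^ 2 * exp (- ((1 + INR (S k) * (q - 1)) * exp r)))) N.

Lemma rho_g_int q N : 1 < q ->
  is_RInt_gen (rho_g q N) MI PI_ (sum_n (fun k => / (INR k + q / (q - 1)) ^ 2) N).
Proof.
  intros Hq.
  eapply gen_ext; [intros r; reflexivity| |].
  2:{ apply gen_plus; [apply gen_plus; [apply term_sq; lra| apply gen_scal, term_sq; lra]|].
      apply gen_sum. intros k. apply gen_scal, term_sq.
      pose proof (pos_INR (S k)). nra. }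
  assert (E : 1 - q ^ 2 * / q ^ 2 = 0) by (field; lra).
  replace (/ 1 ^ 2 + - q ^ 2 * / q ^ 2) with 0 by (field; lra). rewrite Rplus_0_l.
  apply sumext. intros k. rewrite S_INR. pose proof (pos_INR k). field. split; [lra|nra].
Qed.

Lemma exp_lin_pow x c m : exp (- ((1 + INR m * c) * x)) = exp (- x) * exp (- (c * x)) ^ m.
Proof. rewrite exp_pow, <- exp_plus. f_equal. ring. Qed.

Lemma rho_rem q N r : 1 < q ->
  rho_integrand q r - rho_g q N r =
  (q - 1) ^ 2 * exp r ^ 2 * exp (- exp r) * exp (- ((q - 1) * exp r)) ^ S (S N)
    / (1 - exp (- ((q - 1) * exp r))).
Proof.
  intros Hq. unfold rho_integrand, rho_g, gq.
  set (x := exp r). set (E := exp (- x)). set (c := q - 1). set (u := exp (- (c * x))).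
  assert (Hx : 0 < x) by apply exp_pos.
  assert (HE : 0 < E) by apply exp_pos.
  assert (Hu : u < 1) by (unfold u; rewrite <- exp_0; apply exp_increasing; unfold c; nra).
  assert (Eq : exp (- (q * x)) = E * u) by (unfold E, u, c; rewrite <- exp_plus; f_equal; ring).
  assert (E1 : exp (- (1 * x)) = E) by (unfold E; f_equal; ring).
  rewrite Eq, E1.
  rewrite (sumext _ (fun k => (c ^ 2 * x ^ 2 * E) * u ^ S k)).
  2:{ intros k. fold c. rewrite exp_lin_pow. fold E u. ring. }
  rewrite geo by lra.
  simpl. set (P := u ^ N). unfold c. field. split; [lra|]. intro H. assert (E * (1 - u) = 0) by lra.
  apply Rmult_integral in H0. lra.
Qed.

Lemma cont_plus (f g : R -> R) x : continuous f x -> continuous g x -> continuous (fun r => f r + g r) x.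
Proof. intros; apply (continuous_plus (V:=R_NormedModule)); auto. Qed.

Lemma rho_g_cont q N x : continuous (rho_g q N) x.
Proof.
  unfold rho_g. apply cont_plus.
  - apply cder; auto_derive; auto.
  - apply cont_sum. intros k. apply cder; auto_derive; auto.
Qed.

Lemma rho_cont q x : 1 < q -> continuous (rho_integrand q) x.
Proof.
  intros Hq. apply cder. unfold rho_integrand, gq. auto_derive.
  pose proof (gq_pos q x Hq). lra.
Qed.

Lemma rho_bound q N r : 1 < q ->
  0 <= rho_integrand q r - rho_g q N r <=
  (q - 1) * exp r * (1 + (q - 1) * exp r) * exp (- ((1 + INR (S (S N)) * (q - 1)) * exp r)).
Proof.
  intros Hq. rewrite rho_rem by auto. rewrite exp_lin_pow.
  set (x := exp r). set (E := exp (- x)). set (c := q - 1). set (u := exp (- (c * x))).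
  assert (Hx : 0 < x) by apply exp_pos.
  assert (HE : 0 < E) by apply exp_pos.
  assert (Hc : 0 < c) by (unfold c; lra).
  assert (Hu0 : 0 < u) by apply exp_pos.
  assert (Hu : u < 1) by (unfold u; rewrite <- exp_0; apply exp_increasing; nra).
  assert (HP : 0 < u ^ S (S N)) by (apply pow_lt; lra).
  assert (Hb : u * (1 + c * x) <= 1).
  { unfold u. rewrite exp_Ropp. pose proof (exp_ineq1_le (c * x)). pose proof (exp_pos (c * x)).
    apply Rmult_le_reg_l with (exp (c * x)); auto. rewrite <- Rmult_assoc, Rinv_r by lra. lra. }
  set (P := E * u ^ S (S N)). assert (0 < P) by (unfold P; nra).
  replace (c ^ 2 * x ^ 2 * E * u ^ S (S N) / (1 - u)) with (c ^ 2 * x ^ 2 * P / (1 - u)) by (unfold P; field; lra).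
  split.
  - apply Rmult_le_pos; [|apply Rlt_le, Rinv_0_lt_compat; lra]. 
    apply Rmult_le_pos; [|lra]. apply Rmult_le_pos; apply pow_le; lra.
  - unfold Rdiv. apply Rmult_le_reg_r with (1 - u); [lra|].
    rewrite Rmult_assoc, Rinv_l, Rmult_1_r by lra.
    replace (c * x * (1 + c * x) * P * (1 - u)) with ((c * x) * P * ((1 + c * x) * (1 - u))) by ring.
    replace (c ^ 2 * x ^ 2 * P) with ((c * x) * P * (c * x)) by ring.
    apply Rmult_le_compat_l; [apply Rmult_le_pos; nra|]. nra.
Qed.

Lemma rho_tail q N a b : 1 < q -> a <= b ->
  RInt (fun r => rho_integrand q r - rho_g q N r) a b <= 2 / INR (S (S N)).
Proof.
  intros Hq Hab. set (c := q - 1). set (n := INR (S (S N))). set (A := 1 + n * c).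
  assert (Hc : 0 < c) by (unfold c; lra).
  assert (Hn : 1 <= n) by (unfold n; rewrite S_INR; pose proof (pos_INR (S N)); lra).
  assert (HA : n * c < A) by (unfold A; lra).
  assert (HA0 : 0 < A) by nra.
  eapply Rle_trans.
  - apply (RInt_le_prim _ (fun r => c * exp r * (1 + c * exp r) * exp (- (A * exp r)))
      (fun r => - c * exp (- (A * exp r)) * ((1 + c * exp r) / A + c / A ^ 2))); auto.
    + intros x. apply cont_plus; [apply rho_cont; auto|]. 
      apply (continuous_opp (V:=R_NormedModule)). apply rho_g_cont.
    + intros x. apply cder; auto_derive; auto.
    + intros x. auto_derive; auto. field. lra.
    + intros x _. apply rho_bound; auto.
  - set (xa := exp a). set (xb := exp b).
    assert (0 < xa) by apply exp_pos. assert (0 < xb) by apply exp_pos.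
    assert (Eb : 0 <= exp (- (A * xb)) * ((1 + c * xb) / A + c / A ^ 2)).
    { apply Rmult_le_pos; [apply Rlt_le, exp_pos|]. apply Rplus_le_le_0_compat; apply Rlt_le, Rdiv_lt_0_compat; try nra; apply pow_lt; lra. }
    assert (Ea1 : exp (- (A * xa)) <= 1) by (rewrite <- exp_0; apply exp_le'; nra).
    assert (Ea2 : exp (- (A * xa)) * (1 + c * xa) <= 1).
    { rewrite exp_Ropp. pose proof (exp_ineq1_le (A * xa)). pose proof (exp_pos (A * xa)).
      assert (c <= A) by (unfold A; nra). assert (c * xa <= A * xa) by (apply Rmult_le_compat_r; lra).
      apply Rmult_le_reg_l with (exp (A * xa)); auto. rewrite <- Rmult_assoc, Rinv_r by (apply Rgt_not_eq; assumption). nra. }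
    assert (Ea0 : 0 < exp (- (A * xa))) by apply exp_pos.
    assert (H1 : c / A <= / n).
    { apply Rmult_le_reg_r with (A * n); [nra|]. unfold Rdiv.
      replace (c * / A * (A * n)) with (c * n) by (field; lra).
      replace (/ n * (A * n)) with A by (field; lra). nra. }
    assert (0 < / n) by (apply Rinv_0_lt_compat; lra).
    assert (/ n <= 1) by (rewrite <- Rinv_1; apply Rinv_le_contravar; lra).
    assert (0 <= c / A) by (apply Rlt_le, Rdiv_lt_0_compat; lra).
    assert (Ha : exp (- (A * xa)) * ((1 + c * xa) / A + c / A ^ 2) <= / A + c / A ^ 2).
    { replace (exp (- (A * xa)) * ((1 + c * xa) / A + c / A ^ 2)) with
        ((exp (- (A * xa)) * (1 + c * xa)) * / A + exp (- (A * xa)) * (c / A ^ 2)) by (field; lra).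
      replace (/ A + c / A ^ 2) with (1 * / A + 1 * (c / A ^ 2)) by ring.
      assert (0 < / A) by (apply Rinv_0_lt_compat; lra).
      assert (0 < c / A ^ 2) by (apply Rdiv_lt_0_compat; [lra| apply pow_lt; lra]).
      apply Rplus_le_compat; apply Rmult_le_compat_r; lra. }
    apply Rle_trans with (c * (/ A + c / A ^ 2)).
    { assert (0 <= c * (exp (- (A * xb)) * ((1 + c * xb) / A + c / A ^ 2))) by (apply Rmult_le_pos; lra).
      apply Rmult_le_compat_l with (r := c) in Ha; [|lra]. 
      replace (- c * exp (- (A * xb)) * ((1 + c * xb) / A + c / A ^ 2) - - c * exp (- (A * xa)) * ((1 + c * xa) / A + c / A ^ 2))
        with (c * (exp (- (A * xa)) * ((1 + c * xa) / A + c / A ^ 2)) - c * (exp (- (A * xb)) * ((1 + c * xb) / A + c / A ^ 2))) by ring.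
      lra. }
    replace (c * (/ A + c / A ^ 2)) with (c / A + (c / A) * (c / A)) by (field; lra).
    replace (2 / n) with (/ n + / n) by (field; lra). nra.
Qed.

Lemma rho_main q : 1 < q ->
  is_RInt_gen (rho_integrand q) MI PI_ (Series (fun k => / (INR k + q / (q - 1)) ^ 2)).
Proof.
  intros Hq. set (w := fun k => / (INR k + q / (q - 1)) ^ 2).
  assert (Hw : is_series w (Series w)).
  { apply Series_correct, ex_inv_sq. 
    apply Rmult_le_reg_r with (q - 1); [lra|]. unfold Rdiv. rewrite Rmult_assoc, Rinv_l by lra. lra. }
  apply gen_approx. { intros; apply rho_cont; auto. }
  intros eps He.
  apply is_series_lim, is_lim_seq_spec in Hw. destruct (Hw (mkposreal eps He)) as [N0 HN0]. simpl in HN0.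
  destruct (INR_unbounded (2 / eps)) as [N1 HN1].
  set (N := max N0 N1).
  exists (rho_g q N), (sum_n w N). split; [apply rho_g_int; auto|]. split.
  { apply Rlt_le, HN0. unfold N; lia. }
  intros a b Hab.
  rewrite RInt_sub by (intros; first [apply rho_cont; auto | apply rho_g_cont]).
  assert (0 <= RInt (fun x => rho_integrand q x - rho_g q N x) a b).
  { apply RInt_ge_0; auto. apply exRc; intros; apply cont_plus; [apply rho_cont; auto|].
    apply (continuous_opp (V:=R_NormedModule)). apply rho_g_cont.
    intros; apply rho_bound; auto. }
  pose proof (rho_tail q N a b Hq Hab).
  rewrite Rabs_pos_eq by auto. eapply Rle_trans; [exact H0|].
  assert (INR N1 <= INR (S (S N))) by (apply le_INR; unfold N; lia).
  assert (0 < INR (S (S N))) by (apply lt_0_INR; lia).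
  apply Rmult_le_reg_r with (INR (S (S N))); auto.
  unfold Rdiv. rewrite Rmult_assoc, Rinv_l, Rmult_1_r by lra.
  assert (2 / eps * eps = 2) by (field; lra).
  assert (2 / eps < INR (S (S N))) by lra. 
  apply Rmult_lt_compat_r with (r := eps) in H4; auto. nra.
Qed.

Lemma dpow m (c t : R) : c <> 0 -> is_derive (fun t => t ^ m / c) t (INR m * t ^ pred m / c).
Proof. intros; auto_derive; auto; field; auto. Qed.

Definition SN (N : nat) (t : R) := sum_n (fun k => t ^ S k / INR (S k)) N.

Lemma der_eq (f : R -> R) x l l' : is_derive f x l -> l = l' -> is_derive f x l'.
Proof. intros H E; subst; auto. Qed.

Lemma der_ext (f g : R -> R) x l : (forall t, f t = g t) -> is_derive f x l -> is_derive g x l.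
Proof. apply (is_derive_ext (K:=R_AbsRing) (V:=R_NormedModule)). Qed.

Lemma dSN N t : is_derive (SN N) t (sum_n (fun k => t ^ k) N).
Proof.
  induction N.
  - apply (der_ext (fun t => t ^ 1 / INR 1)). intros; unfold SN; now rewrite sum0.
    eapply der_eq. apply dpow. simpl; lra. rewrite sum0. simpl. field.
  - apply (der_ext (fun t => SN N t + t ^ S (S N) / INR (S (S N)))).
    intros; unfold SN; now rewrite sumS.
    eapply der_eq. apply (is_derive_plus (K:=R_AbsRing) (V:=R_NormedModule)); [apply IHN| apply dpow].
    assert (HN : 0 < INR (S (S N))) by (apply lt_0_INR; lia). simpl in HN |- *. lra.
    assert (HN : 0 < INR (S (S N))) by (apply lt_0_INR; lia).
    rewrite sumS. unfold plus; simpl. simpl in HN. field. lra.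
Qed.

Lemma mono_der (F f : R -> R) a b : a <= b -> (forall x, a <= x <= b -> is_derive F x (f x)) ->
  (forall x, a <= x <= b -> continuous f x) -> (forall x, a < x < b -> 0 <= f x) -> F a <= F b.
Proof.
  intros Hab Hd Hc Hp.
  assert (HI : is_RInt f a b (minus (F b) (F a))).
  { apply (is_RInt_derive (V:=R_CompleteNormedModule)); intros x Hx; rewrite Rmin_left, Rmax_right in Hx by lra; auto. }
  assert (Hex : ex_RInt f a b) by (eexists; exact HI).
  apply (is_RInt_unique (V:=R_CompleteNormedModule)) in HI.
  pose proof (RInt_ge_0 f a b Hab Hex Hp). rewrite HI in H. unfold minus, plus, opp in H; simpl in H. lra.
Qed.

Lemma SN0 N : SN N 0 = 0.
Proof. unfold SN; induction N. rewrite sum0; simpl; field. rewrite sumS, IHN. simpl. field. 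
  apply Rgt_not_eq. assert (0 < INR (S (S N))) by (apply lt_0_INR; lia). simpl in H. lra. Qed.

Lemma SN_nonneg N t : 0 <= t -> 0 <= SN N t.
Proof.
  intros Ht. unfold SN; induction N.
  - rewrite sum0. apply Rmult_le_pos; [apply pow_le; auto| apply Rlt_le, Rinv_0_lt_compat, lt_0_INR; lia].
  - rewrite sumS. apply Rplus_le_le_0_compat; auto.
    apply Rmult_le_pos; [apply pow_le; auto| apply Rlt_le, Rinv_0_lt_compat, lt_0_INR; lia].
Qed.

Definition Rm (N : nat) (t : R) := - ln (1 - t) - SN N t.

Lemma Rm_der N t : t < 1 -> is_derive (Rm N) t (t ^ S N / (1 - t)).
Proof.
  intros Ht. unfold Rm.
  eapply der_eq. apply (is_derive_minus (K:=R_AbsRing) (V:=R_NormedModule)); [|apply dSN].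
  auto_derive; [lra| reflexivity].
  rewrite sum_n_Reals, tech3 by lra. unfold minus, plus, opp; simpl. field. lra.
Qed.

Lemma Rm_cont N x : x < 1 -> continuous (fun t => t ^ S N / (1 - t)) x.
Proof. intros Hx. apply cder. auto_derive. lra. Qed.

Lemma Rm_nonneg N u : 0 <= u < 1 -> 0 <= Rm N u.
Proof.
  intros Hu. replace 0 with (Rm N 0) by (unfold Rm; rewrite SN0; replace (1 - 0) with 1 by ring; rewrite ln_1; ring).
  apply (mono_der _ (fun t => t ^ S N / (1 - t))); try lra.
  - intros; apply Rm_der; lra.
  - intros; apply Rm_cont; lra.
  - intros x Hx. apply Rmult_le_pos; [apply pow_le; lra| apply Rlt_le, Rinv_0_lt_compat; lra].
Qed.

Lemma Rm_bound N u : 0 <= u < 1 -> (1 - u) * Rm N u <= / INR (S (S N)).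
Proof.
  intros Hu. set (n := INR (S (S N))). assert (Hn : 0 < n) by (apply lt_0_INR; lia).
  assert (Hu1 : 0 < 1 - u) by lra.
  assert (Rm0 : Rm N 0 = 0) by (unfold Rm; rewrite SN0; replace (1 - 0) with 1 by ring; rewrite ln_1; ring).
  assert (H : 0 ^ S (S N) / (n * (1 - u)) - Rm N 0 <= u ^ S (S N) / (n * (1 - u)) - Rm N u).
  { apply (mono_der (fun t => t ^ S (S N) / (n * (1 - u)) - Rm N t)
       (fun t => INR (S (S N)) * t ^ S N / (n * (1 - u)) - t ^ S N / (1 - t))); try lra.
    - intros x Hx. apply (is_derive_minus (K:=R_AbsRing) (V:=R_NormedModule)).
      apply (dpow (S (S N))). apply Rgt_not_eq, Rmult_lt_0_compat; lra.
      apply Rm_der; lra.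
    - intros x Hx. apply cder. auto_derive. lra.
    - intros x Hx. fold n. replace (n * x ^ S N / (n * (1 - u)) - x ^ S N / (1 - x)) with
        (x ^ S N * (/ (1 - u) - / (1 - x))) by (field; lra).
      apply Rmult_le_pos; [apply pow_le; lra|]. 
      assert (/ (1 - x) <= / (1 - u)) by (apply Rinv_le_contravar; lra). lra. }
  rewrite Rm0 in H. simpl (0 ^ S (S N)) in H.
  replace (0 * (0 * 0 ^ N) / (n * (1 - u)) - 0) with 0 in H by (field; lra).
  assert (Hp : u ^ S (S N) <= 1) by (pose proof (pow_lt_1_compat u (S (S N)) Hu ltac:(lia)); lra).
  assert (Rm N u <= / (n * (1 - u))).
  { apply Rle_trans with (u ^ S (S N) / (n * (1 - u))). lra.
    unfold Rdiv. rewrite <- (Rmult_1_l (/ (n * (1 - u)))) at 2. apply Rmult_le_compat_r; auto.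
    apply Rlt_le, Rinv_0_lt_compat, Rmult_lt_0_compat; lra. }
  apply Rmult_le_compat_l with (r := 1 - u) in H0; [|lra].
  replace ((1 - u) * / (n * (1 - u))) with (/ n) in H0 by (field; lra). exact H0.
Qed.


Lemma ln_le_lin x : 0 < x -> ln x <= x - 1.
Proof. intros Hx. pose proof (exp_ineq1_le (ln x)). rewrite exp_ln in H; lra. Qed.

Lemma ln2_lt_1 : ln 2 < 1.
Proof. rewrite <- ln_exp. apply ln_increasing; [lra|]. pose proof (exp_ineq1 1). lra. Qed.

Lemma inv_ln2 : 0 < / ln 2 < 2.
Proof.
  pose proof ln_lt_2. split. apply Rinv_0_lt_compat; lra.
  assert (/ ln 2 < / (/ 2)) by (apply Rinv_lt_contravar; [apply Rmult_lt_0_compat; lra | lra]). rewrite Rinv_inv in H0. exact H0.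
Qed.

Lemma vlog v : 0 < v <= 1 -> v * (- ln v) <= sqrt v.
Proof.
  intros Hv. set (s := sqrt v).
  assert (Hs : 0 < s) by (apply sqrt_lt_R0; lra).
  assert (Hss : s * s = v) by (apply sqrt_sqrt; lra).
  assert (Hs1 : s <= 1) by (rewrite <- sqrt_1; apply sqrt_le_1_alt; lra).
  rewrite <- Hss, ln_mult by lra.
  set (y := / s). assert (Hy : 1 <= y) by (unfold y; rewrite <- Rinv_1; apply Rinv_le_contravar; lra).
  assert (Ey : - ln s = ln y) by (unfold y; rewrite ln_Rinv; auto).
  assert (ln y <= y / 2).
  { replace y with (2 * (y / 2)) at 1 by field. rewrite ln_mult by lra.
    pose proof (ln_le_lin (y / 2)). pose proof ln2_lt_1. lra. }
  assert (s * y = 1) by (unfold y; field; lra).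
  replace (s * s * - (ln s + ln s)) with (s * s * (2 * ln y)) by (rewrite <- Ey; ring).
  replace (s * s * (2 * ln y)) with (s * (2 * (s * ln y))) by ring.
  assert (s * ln y <= s * (y / 2)) by (apply Rmult_le_compat_l; lra).
  assert (2 * (s * ln y) <= 1) by nra.
  nra.
Qed.

Lemma sum_scal C (a : nat -> R) N : @eq R (sum_n (fun k => C * a k) N) (C * sum_n a N).
Proof. induction N. now rewrite !sum0. rewrite !sumS, IHN. ring. Qed.

Lemma cont_scal k (f : R -> R) x : continuous f x -> continuous (fun r => k * f r) x.
Proof.
  intros H. apply (continuous_comp f (fun y => k * y)); auto. apply cder; auto_derive; auto.
Qed.

Definition phi_g (q : R) (N : nat) (r : R) : R :=
  / ln 2 * (exp r * (exp (- exp r) - exp (- (q * exp r))) +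
    sum_n (fun k => / (INR k + 1) * (exp (- ((1 + INR (S k) * (q - 1)) * exp r))
                                    - exp (- ((q + INR (S k) * (q - 1)) * exp r)))) N).

Definition sterm (q : R) (k : nat) : R :=
  / (INR k + 1) * (ln (q + INR (S k) * (q - 1)) - ln (1 + INR (S k) * (q - 1))).

Lemma phi_g_int q N : 1 < q ->
  is_RInt_gen (phi_g q N) MI PI_ (/ ln 2 * ((1 - / q) + sum_n (sterm q) N)).
Proof.
  intros Hq. apply gen_scal, gen_plus; [apply term_lin; auto|].
  apply gen_sum. intros k. apply gen_scal, frul.
  pose proof (pos_INR (S k)). nra. lra.
Qed.

Lemma phi_g_cont q N x : continuous (phi_g q N) x.
Proof.
  unfold phi_g. apply cont_scal, cont_plus.
  - apply cder; auto_derive; auto.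
  - apply cont_sum. intros k. apply cder; auto_derive; auto.
Qed.

Lemma phi_cont q x : 1 < q -> continuous (phi_integrand q) x.
Proof.
  intros Hq. apply cder. unfold phi_integrand, log2, gq. auto_derive.
  pose proof (gq_pos q x Hq). lra.
Qed.

Lemma phi_rem q N r : 1 < q ->
  phi_integrand q r - phi_g q N r = / ln 2 * (gq q r * Rm N (exp (- ((q - 1) * exp r)))).
Proof.
  intros Hq. unfold phi_integrand, phi_g, log2, gq, Rm, SN.
  set (x := exp r). set (E := exp (- x)). set (c := q - 1). set (u := exp (- (c * x))).
  assert (Hx : 0 < x) by apply exp_pos.
  assert (HE : 0 < E) by apply exp_pos.
  assert (Hu : u < 1) by (unfold u; rewrite <- exp_0; apply exp_increasing; unfold c; nra).
  assert (Hu0 : 0 < u) by apply exp_pos.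
  assert (Eq : exp (- (q * x)) = E * u) by (unfold E, u, c; rewrite <- exp_plus; f_equal; ring).
  rewrite Eq.
  rewrite (sumext _ (fun k => (E - E * u) * (u ^ S k / INR (S k)))).
  2:{ intros k. rewrite exp_lin_pow.
      replace ((q + INR (S k) * c) * x) with ((1 + INR (S (S k)) * c) * x) by (rewrite !S_INR; unfold c; ring).
      rewrite exp_lin_pow. fold E u. rewrite S_INR. simpl. field. pose proof (pos_INR k). lra. }
  rewrite sum_scal.
  replace (E - E * u) with (E * (1 - u)) by ring.
  rewrite ln_mult by lra. unfold E. rewrite ln_exp. fold E.
  pose proof ln_lt_2. field. lra.
Qed.

Lemma phi_bounds q N r : 1 < q ->
  0 <= phi_integrand q r - phi_g q N r /\
  phi_integrand q r - phi_g q N r <= 2 * sqrt ((q - 1) * exp r) /\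
  phi_integrand q r - phi_g q N r <= 2 / (INR (S (S N)) * (1 + exp r)).
Proof.
  intros Hq. rewrite phi_rem by auto. unfold gq.
  set (x := exp r). set (E := exp (- x)). set (c := q - 1). set (u := exp (- (c * x))).
  assert (Hx : 0 < x) by apply exp_pos.
  assert (HE : 0 < E) by apply exp_pos.
  assert (Hc : 0 < c) by (unfold c; lra).
  assert (Hu : u < 1) by (unfold u; rewrite <- exp_0; apply exp_increasing; nra).
  assert (Hu0 : 0 < u) by apply exp_pos.
  assert (Eq : exp (- (q * x)) = E * u) by (unfold E, u, c; rewrite <- exp_plus; f_equal; ring).
  rewrite Eq. replace (E - E * u) with (E * (1 - u)) by ring.
  pose proof inv_ln2 as [L0 L2].
  assert (R0 : 0 <= Rm N u) by (apply Rm_nonneg; lra).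
  assert (R1 : (1 - u) * Rm N u <= / INR (S (S N))) by (apply Rm_bound; lra).
  assert (R2 : Rm N u <= - ln (1 - u)) by (unfold Rm; pose proof (SN_nonneg N u); lra).
  assert (E1 : E <= 1) by (unfold E; rewrite <- exp_0; apply exp_le'; lra).
  assert (HV : 0 < 1 - u <= 1) by lra.
  assert (Hv : 1 - u <= c * x) by (unfold u; pose proof (exp_ineq1_le (- (c * x))); lra).
  assert (Hn : 0 < INR (S (S N))) by (apply lt_0_INR; lia).
  split; [|split].
  - apply Rmult_le_pos; [lra|]. apply Rmult_le_pos; [|lra]. apply Rmult_le_pos; lra.
  - assert (A1 : E * (1 - u) * Rm N u <= (1 - u) * (- ln (1 - u))).
    { replace (E * (1 - u) * Rm N u) with (E * ((1 - u) * Rm N u)) by ring.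
      apply Rle_trans with (1 * ((1 - u) * Rm N u)). apply Rmult_le_compat_r; [apply Rmult_le_pos|]; lra.
      rewrite Rmult_1_l. apply Rmult_le_compat_l; lra. }
    pose proof (vlog (1 - u) HV).
    assert (sqrt (1 - u) <= sqrt (c * x)) by (apply sqrt_le_1_alt; lra).
    assert (0 <= E * (1 - u) * Rm N u) by (apply Rmult_le_pos; [apply Rmult_le_pos|]; lra).
    apply Rle_trans with (/ ln 2 * sqrt (c * x)). apply Rmult_le_compat_l; lra.
    apply Rmult_le_compat_r; [apply sqrt_pos| lra].
  - assert (A1 : E * (1 - u) * Rm N u <= E * / INR (S (S N))).
    { rewrite Rmult_assoc. apply Rmult_le_compat_l; lra. }
    assert (A2 : E <= / (1 + x)) by (unfold E; rewrite exp_Ropp; pose proof (exp_ineq1_le x); apply Rinv_le_contravar; lra).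
    assert (0 <= E * (1 - u) * Rm N u) by (apply Rmult_le_pos; [apply Rmult_le_pos|]; lra).
    assert (0 < / INR (S (S N))) by (apply Rinv_0_lt_compat; lra).
    apply Rle_trans with (/ ln 2 * (E * / INR (S (S N)))). apply Rmult_le_compat_l; lra.
    apply Rle_trans with (2 * (/ (1 + x) * / INR (S (S N)))).
    apply Rmult_le_compat; [lra | apply Rmult_le_pos; lra | lra | apply Rmult_le_compat_r; lra].
    right. field. lra.
Qed.

Lemma RInt_mono_int (f : R -> R) a b a0 b0 : a0 <= a -> a <= b -> b <= b0 ->
  (forall x, continuous f x) -> (forall x, 0 <= f x) -> RInt f a b <= RInt f a0 b0.
Proof.
  intros H1 H2 H3 Hc Hp.
  rewrite <- (RInt_Chasles (V:=R_CompleteNormedModule) f a0 a b0) by (apply exRc; auto).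
  rewrite <- (RInt_Chasles (V:=R_CompleteNormedModule) f a b b0) by (apply exRc; auto).
  unfold plus; simpl.
  assert (0 <= RInt f a0 a) by (apply RInt_ge_0; auto; apply exRc; auto).
  assert (0 <= RInt f b b0) by (apply RInt_ge_0; auto; apply exRc; auto).
  lra.
Qed.

Lemma phi_tail q N a b r0 : 1 < q -> a <= b -> r0 <= 0 ->
  RInt (fun x => phi_integrand q x - phi_g q N x) a b <=
  4 * sqrt ((q - 1) * exp r0) + 2 * (1 - r0) / INR (S (S N)).
Proof.
  intros Hq Hab Hr0. set (f := fun x => phi_integrand q x - phi_g q N x).
  set (c := q - 1). set (n := INR (S (S N))).
  assert (Hc : 0 < c) by (unfold c; lra).
  assert (Hn : 0 < n) by (apply lt_0_INR; lia).
  assert (Hf : forall x, continuous f x).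
  { intros x; apply cont_plus; [apply phi_cont; auto|].
    apply (continuous_opp (V:=R_NormedModule)). apply phi_g_cont. }
  assert (Hb := phi_bounds q N).
  set (a0 := Rmin a r0). set (b0 := Rmax b r0).
  assert (Ha0 : a0 <= a /\ a0 <= r0) by (unfold a0; split; [apply Rmin_l | apply Rmin_r]).
  assert (Hb0 : b <= b0 /\ r0 <= b0) by (unfold b0; split; [apply Rmax_l | apply Rmax_r]).
  apply Rle_trans with (RInt f a0 b0).
  { apply RInt_mono_int; try lra; auto. intros x; apply Hb; auto. }
  rewrite <- (RInt_Chasles (V:=R_CompleteNormedModule) f a0 r0 b0) by (apply exRc; auto).
  unfold plus; simpl.
  assert (HL : RInt f a0 r0 <= 4 * sqrt (c * exp r0) - 4 * sqrt (c * exp a0)).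
  { apply (RInt_le_prim f (fun r => 2 * sqrt (c * exp r)) (fun r => 4 * sqrt (c * exp r))); try lra; auto.
    - intros x; apply cder; auto_derive. pose proof (exp_pos x). nra.
    - intros x. auto_derive. pose proof (exp_pos x). nra.
      assert (Hs : 0 < sqrt (c * exp x)) by (apply sqrt_lt_R0; pose proof (exp_pos x); nra).
      assert (Hss : sqrt (c * exp x) * sqrt (c * exp x) = c * exp x) by (apply sqrt_sqrt; pose proof (exp_pos x); nra).
      replace (c * (1 * exp x)) with (sqrt (c * exp x) * sqrt (c * exp x)) by (rewrite Hss; ring). field. lra.
    - intros x _. apply Hb; auto. }
  assert (HR : RInt f r0 b0 <= 2 / n * (b0 - ln (1 + exp b0)) - 2 / n * (r0 - ln (1 + exp r0))).
  { apply (RInt_le_prim f (fun r => 2 / (n * (1 + exp r))) (fun r => 2 / n * (r - ln (1 + exp r)))); try lra; auto.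
    - intros x; apply cder; auto_derive. pose proof (exp_pos x). apply Rgt_not_eq; nra.
    - intros x. auto_derive. pose proof (exp_pos x). lra.
      pose proof (exp_pos x). field. lra.
    - intros x _. apply Hb; auto. }
  assert (0 <= sqrt (c * exp a0)) by apply sqrt_pos.
  assert (b0 <= ln (1 + exp b0)).
  { rewrite <- (ln_exp b0) at 1. left. apply ln_increasing. apply exp_pos. lra. }
  assert (ln (1 + exp r0) <= 1).
  { pose proof (ln_le_lin (1 + exp r0)). pose proof (exp_pos r0).
    assert (exp r0 <= 1) by (rewrite <- exp_0; apply exp_le'; lra). lra. }
  assert (0 < 2 / n) by (apply Rdiv_lt_0_compat; lra).
  assert (2 / n * (b0 - ln (1 + exp b0)) <= 0) by nra.
  assert (- (2 / n * (r0 - ln (1 + exp r0))) <= 2 * (1 - r0) / n).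
  { replace (2 * (1 - r0) / n) with (2 / n * (1 - r0)) by (field; lra). nra. }
  lra.
Qed.

Definition st (q : R) (k : nat) : R :=
  / (INR k + 1) * log2 ((INR k + 1 + / (q - 1) + 1) / (INR k + 1 + / (q - 1))).

Lemma st_eq q k : 1 < q -> st q k = / ln 2 * sterm q k.
Proof.
  intros Hq. unfold st, sterm, log2. rewrite S_INR. pose proof (pos_INR k).
  assert (0 < q - 1) by lra.
  replace ((INR k + 1 + / (q - 1) + 1) / (INR k + 1 + / (q - 1))) with
    ((q + (INR k + 1) * (q - 1)) / (1 + (INR k + 1) * (q - 1))) by (field; split; nra).
  rewrite ln_div by nra. field. pose proof ln_lt_2. lra.
Qed.

Lemma ex_st q : 1 < q -> ex_series (st q).
Proof.
  intros Hq. apply (ex_le_tel _ 4). intros k. rewrite st_eq by auto. unfold sterm.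
  rewrite S_INR. set (m := INR k + 1). set (c := q - 1).
  assert (Hm : 1 <= m) by (unfold m; pose proof (pos_INR k); lra).
  assert (Hc : 0 < c) by (unfold c; lra).
  replace (INR k + 2) with (m + 1) by (unfold m; ring).
  pose proof inv_ln2 as [L0 L2].
  assert (E : ln (q + m * c) - ln (1 + m * c) = ln (1 + c / (1 + m * c))).
  { rewrite <- ln_div by nra. f_equal. unfold c. field. nra. }
  rewrite E.
  assert (Hd : 0 < c / (1 + m * c)) by (apply Rdiv_lt_0_compat; nra).
  assert (Hl0 : 0 <= ln (1 + c / (1 + m * c))).
  { rewrite <- ln_1. left. apply ln_increasing; lra. }
  assert (Hl1 : ln (1 + c / (1 + m * c)) <= / m).
  { pose proof (ln_le_lin (1 + c / (1 + m * c))). apply Rle_trans with (c / (1 + m * c)). lra.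
    apply Rmult_le_reg_r with (m * (1 + m * c)). nra. unfold Rdiv.
    replace (c * / (1 + m * c) * (m * (1 + m * c))) with (c * m) by (field; nra).
    replace (/ m * (m * (1 + m * c))) with (1 + m * c) by (field; lra). nra. }
  assert (0 < / m) by (apply Rinv_0_lt_compat; lra).
  rewrite Rabs_pos_eq by (apply Rmult_le_pos; [lra| apply Rmult_le_pos; lra]).
  apply Rle_trans with (2 * (/ m * / m)).
  { apply Rmult_le_compat; try lra. apply Rmult_le_pos; lra. apply Rmult_le_compat_l; lra. }
  replace (4 * (/ m - / (m + 1))) with (2 * (/ m * (2 / (m + 1)))) by (field; lra).
  apply Rmult_le_compat_l; [lra|]. apply Rmult_le_compat_l; [lra|].
  apply Rmult_le_reg_r with (m * (m + 1)). nra. unfold Rdiv.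
  replace (/ m * (m * (m + 1))) with (m + 1) by (field; lra).
  replace (2 * / (m + 1) * (m * (m + 1))) with (2 * m) by (field; lra). lra.
Qed.

Lemma phi_main q : 1 < q ->
  is_RInt_gen (phi_integrand q) MI PI_ ((1 - / q) / ln 2 + Series (st q)).
Proof.
  intros Hq. set (c := q - 1). assert (Hc : 0 < c) by (unfold c; lra).
  assert (Hw : is_series (st q) (Series (st q))) by (apply Series_correct, ex_st; auto).
  apply gen_approx. { intros; apply phi_cont; auto. }
  intros eps He.
  apply is_series_lim, is_lim_seq_spec in Hw. destruct (Hw (mkposreal eps He)) as [N0 HN0]. simpl in HN0.
  set (m0 := Rmin 1 (eps / 8 * (eps / 8) / c)).
  assert (Hm0 : 0 < m0) by (unfold m0; apply Rmin_glb_lt; [lra| apply Rdiv_lt_0_compat; nra]).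
  set (r0 := ln m0).
  assert (Hr0 : r0 <= 0) by (unfold r0; rewrite <- ln_1; destruct (Rle_lt_or_eq_dec m0 1 (Rmin_l _ _)) as [h|h];
     [left; apply ln_increasing; lra| rewrite h; lra]).
  destruct (INR_unbounded (4 * (1 - r0) / eps)) as [N1 HN1].
  set (N := max N0 N1).
  exists (phi_g q N), (/ ln 2 * ((1 - / q) + sum_n (sterm q) N)).
  split; [apply phi_g_int; auto|]. split.
  { assert (E : sum_n (st q) N = / ln 2 * sum_n (sterm q) N).
    { rewrite <- sum_scal. apply sumext. intros; apply st_eq; auto. }
    assert (Rabs (sum_n (st q) N - Series (st q)) < eps) by (apply HN0; unfold N; lia).
    replace (/ ln 2 * (1 - / q + sum_n (sterm q) N) - ((1 - / q) / ln 2 + Series (st q)))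
      with (sum_n (st q) N - Series (st q)) by (rewrite E; field; pose proof ln_lt_2; lra).
    lra. }
  intros a b Hab.
  rewrite RInt_sub by (intros; first [apply phi_cont; auto | apply phi_g_cont]).
  assert (0 <= RInt (fun x => phi_integrand q x - phi_g q N x) a b).
  { apply RInt_ge_0; auto. apply exRc; intros; apply cont_plus; [apply phi_cont; auto|].
    apply (continuous_opp (V:=R_NormedModule)). apply phi_g_cont.
    intros; apply phi_bounds; auto. }
  pose proof (phi_tail q N a b r0 Hq Hab Hr0).
  rewrite Rabs_pos_eq by auto. eapply Rle_trans; [exact H0|].
  assert (T1 : 4 * sqrt ((q - 1) * exp r0) <= eps / 2).
  { fold c. unfold r0. rewrite exp_ln by auto.
    assert (c * m0 <= eps / 8 * (eps / 8)).
    { apply Rle_trans with (c * (eps / 8 * (eps / 8) / c)). apply Rmult_le_compat_l; [lra| apply Rmin_r].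
      right; field; lra. }
    assert (sqrt (c * m0) <= eps / 8).
    { rewrite <- (sqrt_square (eps / 8)) by lra. apply sqrt_le_1_alt; auto. }
    lra. }
  assert (T2 : 2 * (1 - r0) / INR (S (S N)) <= eps / 2).
  { assert (INR N1 <= INR (S (S N))) by (apply le_INR; unfold N; lia).
    assert (0 < INR (S (S N))) by (apply lt_0_INR; lia).
    apply Rmult_le_reg_r with (INR (S (S N))); auto.
    unfold Rdiv. rewrite Rmult_assoc, Rinv_l, Rmult_1_r by lra.
    assert (4 * (1 - r0) * / eps * eps = 4 * (1 - r0)) by (field; lra).
    assert (HH : 4 * (1 - r0) * / eps < INR (S (S N))) by (unfold Rdiv in HN1; lra).
    apply Rmult_lt_compat_r with (r := eps) in HH; auto. nra. }
  lra.
Qed.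

Lemma hz_eq q : 1 < q -> hurwitz_zeta 2 (q / (q - 1)) = Series (fun k => / (INR k + q / (q - 1)) ^ 2).
Proof.
  intros Hq. unfold hurwitz_zeta. apply Series_ext. intros k.
  assert (0 < q / (q - 1)) by (apply Rdiv_lt_0_compat; lra).
  pose proof (pos_INR k).
  replace 2 with (INR 2) by (simpl; ring). rewrite Rpower_pow by lra. reflexivity.
Qed.

Theorem mainTheorem3 (q : R) (hq : 1 < q) :
  (exists S : R,
     is_series (fun k : nat =>
        / (INR k + 1) * log2 ((INR k + 1 + / (q - 1) + 1) / (INR k + 1 + / (q - 1)))) S /\
     is_RInt_gen (phi_integrand q) (Rbar_locally m_infty) (Rbar_locally p_infty)
       ((1 - / q) / ln 2 + S)) /\
  is_RInt_gen (rho_integrand q) (Rbar_locally m_infty) (Rbar_locally p_infty)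
    (hurwitz_zeta 2 (q / (q - 1))) /\
  is_series (fun k : nat => / (INR k + q / (q - 1)) ^ 2) (hurwitz_zeta 2 (q / (q - 1))).
Proof.
  split; [|split].
  - exists (Series (st q)). split.
    + apply Series_correct, ex_st; auto.
    + apply phi_main; auto.
  - rewrite hz_eq by auto. apply rho_main; auto.
  - rewrite hz_eq by auto. apply Series_correct, ex_inv_sq.
    apply Rmult_le_reg_r with (q - 1); [lra|]. unfold Rdiv. rewrite Rmult_assoc, Rinv_l by lra. lra.
Qed.
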